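(* Let $b\ge 2$, $s,m\in\mathbb{N}$, let $C_1,\dots,C_s\in\mathbb{Z}_b^{\mathbb{N}\times m}$ and let $\mathcal{P}\subset G^s$ be the digital net with generating matrices $C_1,\dots,C_s$. Let $\mathcal{P}_{\Phi_b}:=\{\Phi_b(\boldsymbol z):\boldsymbol z\in\mathcal{P}\}$ be its folded digital net. Then $\mathcal{P}_{\Phi_b}$ is again a digital net in $G^s$, and its dual net satisfies $$\mathcal{P}_{\Phi_b}^{\perp}=\{\lfloor \boldsymbol k/b\rfloor:\ \boldsymbol k\in \mathcal{E}_0^s\cap \mathcal{P}^{\perp}\},$$ where $\lfloor \boldsymbol k/b\rfloor=(\lfloor k_1/b\rfloor,\dots,\lfloor k_s/b\rfloor)$ for $\boldsymbol k=(k_1,\dots,k_s)$.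
   Context: $b\ge 2$ is an integer, $\mathbb{Z}_b=\{0,\dots,b-1\}$ with addition mod $b$, and $G:=\prod_{i=1}^\infty\mathbb{Z}_b$ (infinite sequences $(\zeta_1,\zeta_2,\dots)^\top$ with coordinatewise addition mod $b$). A digital net in $G^s$ with generating matrices $C_1,\dots,C_s\in\mathbb{Z}_b^{\mathbb{N}\times m}$ (infinite-row matrices with $m$ columns; columns may have infinitely many nonzero entries) is $\mathcal{P}=\{\boldsymbol z_0,\dots,\boldsymbol z_{b^m-1}\}$, where for $0\le h<b^m$ with $b$-adic expansion $h=\sum_{i=0}^{m-1}\eta_ib^i$, $\boldsymbol z_h=(z_{h,1},\dots,z_{h,s})$ with $z_{h,j}=C_j(\eta_0,\dots,\eta_{m-1})^\top\in G$ (arithmetic mod $b$). Its dual net is $\mathcal{P}^\perp=\{\boldsymbol k\in\mathbb{N}_0^s: C_1^\top\vec k_1+\dots+C_s^\top\vec k_s=\boldsymbol 0\in\mathbb{Z}_b^m\}$, where for $k_j=\kappa_{0,j}+\kappa_{1,j}b+\cdots$ (finite $b$-adic expansion) $\vec k_j=(\kappa_{0,j},\kappa_{1,j},\dots)^\top$. The $b$-adic tent transformation $\Phi_b:G\to G$ is $\Phi_b((\zeta_1,\zeta_2,\dots)^\top)=(\eta_1,\eta_2,\dots)^\top$ with $\eta_i=\zeta_{i+1}-\zeta_1 \pmod b$, applied coordinatewise on $G^s$. For $k\in\mathbb{N}$ with $b$-adic digits $\kappa_0,\kappa_1,\dots$, $\delta(k)=\kappa_0+\kappa_1+\cdots$;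 $\mathcal{E}:=\{k\in\mathbb{N}:\delta(k)\equiv 0\pmod b\}$ and $\mathcal{E}_0:=\mathcal{E}\cup\{0\}$. *)

(* Defs.v *)
From mathcomp Require Import all_boot all_algebra.
Set Implicit Arguments. Unset Strict Implicit. Unset Printing Implicit Defensive.
Import GRing.Theory.
Local Open Scope ring_scope.

(* G = prod_{i>=1} Z_b, represented 0-based: z i = zeta_{i+1}. *)
Definition G (b : nat) := nat -> 'Z_b.

Definition digit (b i n : nat) : nat := (n %/ b ^ i %% b)%N.

Definition genmats (b s m : nat) := 'I_s -> nat -> 'I_m -> 'Z_b.

Definition net_point (b s m : nat) (C : genmats b s m) (h : nat) (j : 'I_s)
  : G b := fun i => \sum_(c < m) C j i c * (digit b c h)%:R.

Definition tent (b : nat) (z : G b) : G b := fun i => z i.+1 - z 0%N.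

(* dual net: C_1^T k_1 + ... + C_s^T k_s = 0 in Z_b^m.
   The digits of k with index i >= k vanish, so the sum over i < k is the
   full (finite) b-adic expansion. *)
Definition in_dual (b s m : nat) (C : genmats b s m) (k : 'I_s -> nat) : Prop :=
  forall c : 'I_m,
    \sum_(j < s) \sum_(i < k j) C j i c * (digit b i (k j))%:R = 0.

Definition digsum (b k : nat) : nat := (\sum_(i < k) digit b i k)%N.

Definition inE (b k : nat) : Prop := (0 < k)%N /\ (digsum b k %% b = 0)%N.
Definition inE0 (b k : nat) : Prop := inE b k \/ k = 0%N.

(* Main.v *)
Require Import Defs.
From mathcomp Require Import all_boot all_algebra.
Import GRing.Theory.
Local Open Scope ring_scope.

Lemma digit_big (b i k : nat) : (1 < b)%N -> (k <= i)%N -> digit b i k = 0%N.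
Proof.
move=> hb hki; rewrite /digit divn_small.
  by rewrite mod0n. exact: (leq_ltn_trans hki (ltn_expl i hb)).
Qed.

Lemma digitS (b i k : nat) : digit b i.+1 k = digit b i (k %/ b).
Proof. by rewrite /digit expnS divnMA. Qed.

Lemma digit0 (b k : nat) : digit b 0 k = (k %% b)%N.
Proof. by rewrite /digit expn0 divn1. Qed.

Section Gen.
Variable R : nmodType.

Lemma sum_ext (b : nat) (hb : (1 < b)%N) (g : nat -> nat -> R)
  (hg : forall i, g i 0%N = 0) (k N : nat) : (k <= N)%N ->
  \sum_(i < N) g i (digit b i k) = \sum_(i < k) g i (digit b i k).
Proof.
move=> hkN; rewrite -!(big_mkord xpredT (fun i => g i (digit b i k))).
rewrite (@big_cat_nat _ _ _ k 0 N _ _ (leq0n k) hkN) /= [X in _ + X]big1_seq ?addr0 //.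
move=> i /andP[_]; rewrite mem_index_iota => /andP[hi _].
by rewrite digit_big.
Qed.

Lemma sum_shift (b : nat) (hb : (1 < b)%N) (g : nat -> nat -> R)
  (hg : forall i, g i 0%N = 0) (k : nat) :
  \sum_(i < k) g i (digit b i k) =
  g 0%N (k %% b)%N + \sum_(i < k %/ b) g i.+1 (digit b i (k %/ b)).
Proof.
rewrite -(@sum_ext b hb g hg k k.+1 (leqnSn k)) big_ord_recl /= digit0.
congr (_ + _).
under eq_bigr do rewrite /bump /= add1n digitS.
apply: (@sum_ext b hb (fun i => g i.+1) (fun i => hg i.+1)); exact: leq_div.
Qed.
End Gen.

Lemma digsum_shift (b k : nat) (hb : (1 < b)%N) :
  digsum b k = (k %% b + digsum b (k %/ b))%N.
Proof.
rewrite /digsum.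
exact: (@sum_shift nat b hb (fun _ d => d) (fun _ => erefl) k).
Qed.

Definition S (b : nat) (f : nat -> 'Z_b) (k : nat) : 'Z_b :=
  \sum_(i < k) f i * (digit b i k)%:R.

Arguments S {b}.

Lemma S_shift (b : nat) (hb : (1 < b)%N) (f : nat -> 'Z_b) k :
  S f k = f 0%N * (k %% b)%:R + S (fun i => f i.+1) (k %/ b).
Proof.
by apply: (@sum_shift _ b hb (fun i d => f i * d%:R)) => i; rewrite mulr0.
Qed.

Lemma S_one (b : nat) k : S (fun _ => 1 : 'Z_b) k = (digsum b k)%:R :> 'Z_b.
Proof.
by rewrite /S /digsum natr_sum; apply: eq_bigr => i _; rewrite mul1r.
Qed.

Lemma S_sub (b : nat) (f g : nat -> 'Z_b) k :
  S (fun i => f i - g i) k = S f k - S g k :> 'Z_b.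
Proof.
by rewrite /S -sumrB; apply: eq_bigr => i _; rewrite mulrBl.
Qed.

Lemma S_const (b : nat) (a : 'Z_b) k : S (fun _ => a) k = a * S (fun _ => 1) k.
Proof.
by rewrite /S mulr_sumr; apply: eq_bigr => i _; rewrite mul1r.
Qed.

Arguments S_shift {b}.
Arguments S_one {b}.
Arguments S_sub {b}.
Arguments S_const {b}.

Theorem lemma3p3 (b s m : nat) (hb : (1 < b)%N) (C : genmats b s m) :
  exists D : genmats b s m,
    (forall h : nat, (h < b ^ m)%N ->
       forall (j : 'I_s) (i : nat),
         tent (net_point C h j) i = net_point D h j i) /\
    (forall k : 'I_s -> nat,
       in_dual D k <->
       exists k' : 'I_s -> nat,
         (forall j, inE0 b (k' j)) /\ in_dual C k' /\
         (forall j, k j = (k' j %/ b)%N)).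
Proof.
exists (fun j i c => C j i.+1 c - C j 0%N c); split.
  move=> h _ j i; rewrite /tent /net_point -sumrB.
  by apply: eq_bigr => c _; rewrite mulrBl.
have keyD : forall k (j : 'I_s) (c : 'I_m),
  \sum_(i < k) (C j i.+1 c - C j 0%N c) * (digit b i k)%:R =
  S (fun i => C j i.+1 c) k - C j 0%N c * (digsum b k)%:R.
  move=> k j c; have := S_sub (fun i => C j i.+1 c) (fun _ => C j 0%N c) k.
  by rewrite S_const S_one => <-.
have keyC : forall k (j : 'I_s) (c : 'I_m),
  \sum_(i < k) C j i c * (digit b i k)%:R =
  C j 0%N c * (k %% b)%:R + S (fun i => C j i.+1 c) (k %/ b).
  by move=> k j c; exact: (S_shift hb (fun i => C j i c)).
move=> k; split.
- move=> hD.
  pose r j := ((b - digsum b (k j) %% b) %% b)%N.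
  have hr : forall j, (r j < b)%N by move=> j; rewrite ltn_mod; apply: ltnW.
  have hrd : forall j, ((r j + digsum b (k j)) %% b = 0)%N.
    move=> j; have hlt : (digsum b (k j) %% b < b)%N by rewrite ltn_mod ltnW.
    by rewrite /r modnDml -modnDmr subnK ?modnn // ltnW.
  exists (fun j => k j * b + r j)%N.
  have hdiv : forall j, ((k j * b + r j) %/ b = k j)%N.
    by move=> j; rewrite divnMDl ?(ltnW hb) // divn_small // addn0.
  have hmod : forall j, ((k j * b + r j) %% b = r j)%N.
    by move=> j; rewrite modnMDl modn_small.
  split; [|split].
  + move=> j; case: (posnP (k j * b + r j)%N) => [->|hpos]; [by right|left].
    by split => //; rewrite digsum_shift // hmod hdiv.
  + move=> c; rewrite -[RHS](hD c); apply: eq_bigr => j _.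
    rewrite keyC keyD hdiv hmod addrC; congr (_ + _).
    rewrite -mulrN; congr (_ * _); apply/eqP; rewrite -subr_eq0 opprK -natrD.
    by rewrite -Zp_nat_mod // hrd.
  + by move=> j; rewrite hdiv.
- case=> k' [hE [hC hk]] c.
  rewrite -[RHS](hC c); apply: eq_bigr => j _.
  rewrite keyC keyD hk addrC; congr (_ + _).
  rewrite -mulrN; congr (_ * _); apply/eqP; rewrite eq_sym -subr_eq0 opprK -natrD.
  rewrite -digsum_shift // -Zp_nat_mod //.
  case: (hE j) => [[_ ->]|->] //. by rewrite /digsum big_ord0 mod0n.
Qed.
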